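(* Let $D$ be any tangle diagram and let $i\mapsto(g_i,L_i)$ be any decorated $\mathrm{SL}_2(\mathbb{C})$-coloring of $D$, corresponding to a decorated representation $\rho$. Then there exist $h\in\mathrm{SL}_2(\mathbb{C})$ and a shadow coloring $j\mapsto u_j$ of the conjugated decorated coloring $i\mapsto(h^{-1}g_ih,\,L_ih)$ such that the resulting decorated shadow coloring is admissible.
   Context: Tangle diagrams: a tangle diagram $D$ is an oriented tangle diagram in the square $[0,1]^2$, drawn with strands running from left to right, and viewed as a 4-valent graph with over/under information at each crossing. Segments are the edges of this graph; a strand is cut at every crossing, whether it passes over or under there. Regions are the connected components of the complement of the graph in the square. Above and below: for a segment $i$, $i^{\uparrow}$ is the region on the left of $i$ with respect to its orientation and $i^{\downarrow}$ the region on its right. Crossing labels: rotate a crossing so that both strands point to the right. The incoming segments are $1$ (upper left) and $2$ (lower left). The outgoing segments are $1'$ (lower right, continuing $1$) and $2'$ (upper right, continuing $2$). The crossing is positive if strand $1\to1'$ is over and negative if strand $2\to2'$ is over. Decorated $\mathrm{SL}_2(\mathbb{C})$-coloring: assign to each segment $i$ a matrix $g_i\in\mathrm{SL}_2(\mathbb{C})$ and a line $L_i\subset\mathbb{C}^2$ of row vectors with $L_ig_i=L_i$, such that: - at positive crossings, $g_{1'}=g_1$, $g_{2'}=g_1^{-1}g_2g_1$, $L_{1'}=L_1$ and $L_{2'}=L_2g_1$; - at negative crossings, $g_{2'}=g_2$, $g_{1'}=g_2g_1g_2^{-1}$, $L_{2'}=L_2$ and $L_{1'}=L_1g_2^{-1}$.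 Such colorings are equivalent to decorated representations of the Wirtinger presentation of the tangle group, i.e. representations $\rho$ into $\mathrm{SL}_2(\mathbb{C})$ together with a choice of invariant line for the meridians. Shadow coloring: assign a nonzero column vector $u_j\in\mathbb{C}^2$ to each region with $u_{i^{\downarrow}}=g_iu_{i^{\uparrow}}$ for every segment $i$. Admissibility: with $e_2=(0,1)^T$ and nonzero $v_i\in L_i$, the decorated shadow coloring is admissible if $\det(u_j,e_2)\ne0$ for every region $j$ and $v_ie_2\neq0$, $v_iu_{i^{\uparrow}}\neq0$ for every segment $i$. Here $\det(x,y)$ is the determinant of the matrix with columns $x,y$. *)

(* Defs.v *)
From HB Require Import structures.
From mathcomp Require Import all_boot all_order all_algebra.
From mathcomp Require Export complex reals.

Set Implicit Arguments.
Unset Strict Implicit.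
Unset Printing Implicit Defensive.

Import Order.TTheory GRing.Theory Num.Theory.
Local Open Scope ring_scope.
Local Open Scope nat_scope.


(* Combinatorial model of an oriented tangle diagram in [0,1]^2 with strand   *)
(* endpoints on the left and right sides, in general position w.r.t. the      *)
(* horizontal coordinate x.  The diagram is cut by vertical lines x = const   *)
(* ("levels" 0 .. n) into elementary vertical slices.  On each level the      *)
(* diagram meets finitely many points, indexed 0,1,.. from TOP to BOTTOM, and *)
(* each point carries an orientation: true = strand points to the right,      *)
(* false = strand points to the left.  If a level has m points, the           *)
(* complement of these points in the vertical line has m+1 intervals, indexed *)
(* 0..m from top to bottom (interval r lies between point r-1 and point r);   *)
(* each interval lies in a region of the diagram.  Every segment (edge of the *)
(* 4-valent graph) meets some level, and every region meets some level.       *)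
(* Elementary slices between level l and level l+1:                          *)
(*  - Cross k ov : points k and k+1 exchange through one crossing; ov = true  *)
(*    iff the strand through point k of level l passes OVER.                  *)
(*  - Cup k b    : a turning arc is born; it meets level l+1 in two new       *)
(*    points k, k+1 with orientations b, ~~ b (points of level l at index    *)
(*    >= k are shifted by 2).                                                 *)
(*  - Cap k      : points k, k+1 of level l (of opposite orientations) are    *)
(*    joined by a turning arc and disappear.                                  *)

Inductive slice := Cross of nat & bool | Cup of nat & bool | Cap of nat.

Definition step (o : seq bool) (s : slice) : option (seq bool) :=
  match s with
  | Cross k _ => if k.+1 < size o then
                   Some (take k o ++ [:: nth false o k.+1; nth false o k] ++ drop k.+2 o)
                 else None
  | Cup k b => if k <= size o then Some (take k o ++ [:: b; ~~ b] ++ drop k o)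
               else None
  | Cap k => if (k.+1 < size o) && (nth false o k != nth false o k.+1) then
               Some (take k o ++ drop k.+2 o)
             else None
  end.

Fixpoint levels (o : seq bool) (ss : seq slice) : option (seq (seq bool)) :=
  match ss with
  | [::] => Some [:: o]
  | s :: ss' => match step o s with
                | Some o' => omap (cons o) (levels o' ss')
                | None => None
                end
  end.

(* A point of the diagram: (level, index).  A region-interval: (level, index). *)
Notation pt := (nat * nat)%type.

(* Region on the left (above, i^up) / right (below, i^down) of the segment   *)
(* through point p of a level, w.r.t. its orientation b.                      *)
Definition up_reg (b : bool) (p : nat) : nat := if b then p else p.+1.
Definition down_reg (b : bool) (p : nat) : nat := if b then p.+1 else p.

(* Crossing data of Cross k ov between level l and l+1, given orientations o  *)
(* of level l: (segment 1, segment 1', segment 2, segment 2', positive?),     *)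
(* following the convention: rotate so both strands point right; 1 = upper    *)
(* left incoming, 2 = lower left incoming, 1' continues 1, 2' continues 2;    *)
(* positive iff strand 1 is over.                                            *)
Definition cross_data (o : seq bool) (l k : nat) (ov : bool)
  : pt * pt * pt * pt * bool :=
  let a := l in let b := l.+1 in
  match nth false o k, nth false o k.+1 with
  | true, true   => ((a, k), (b, k.+1), (a, k.+1), (b, k), ov)
  | false, false => ((b, k.+1), (a, k), (b, k), (a, k.+1), ov)
  | true, false  => ((b, k), (a, k.+1), (a, k), (b, k.+1), ~~ ov)
  | false, true  => ((a, k.+1), (b, k), (b, k.+1), (a, k), ~~ ov)
  end.

Section Colorings.
Variable C : fieldType.

(* A line of C^2 (row vectors) is represented by a nonzero spanning row      *)
(* vector; two representatives give the same line iff (v == w)%MS.           *)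

Definition same_seg (g : pt -> 'M[C]_2) (L : pt -> 'rV[C]_2) (x y : pt) : Prop :=
  g x = g y /\ (L x == L y)%MS.

Definition crossing_rule (g : pt -> 'M[C]_2) (L : pt -> 'rV[C]_2)
  (i1 i1' i2 i2' : pt) (pos : bool) : Prop :=
  if pos then
    [/\ g i1' = g i1, g i2' = invmx (g i1) *m g i2 *m g i1,
        (L i1' == L i1)%MS & (L i2' == L i2 *m g i1)%MS]
  else
    [/\ g i2' = g i2, g i1' = g i2 *m g i1 *m invmx (g i2),
        (L i2' == L i2)%MS & (L i1' == L i1 *m invmx (g i2))%MS].

Definition dec_coloring (ss : seq slice) (ls : seq (seq bool))
  (g : pt -> 'M[C]_2) (L : pt -> 'rV[C]_2) : Prop :=
  (forall l p, l < size ls -> p < size (nth [::] ls l) ->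
     [/\ \det (g (l, p)) = 1%R, L (l, p) != 0%R & (L (l, p) *m g (l, p) == L (l, p))%MS])
  /\
  (forall l, l < size ss ->
     let o := nth [::] ls l in
     match nth (Cap 0) ss l with
     | Cross k ov =>
         (forall p, p < size o -> p != k -> p != k.+1 ->
            same_seg g L (l.+1, p) (l, p)) /\
         (let: (i1, i1', i2, i2', pos) := cross_data o l k ov in
          crossing_rule g L i1 i1' i2 i2' pos)
     | Cup k _ =>
         (forall p, p < k -> same_seg g L (l.+1, p) (l, p)) /\
         (forall p, k <= p < size o -> same_seg g L (l.+1, p.+2) (l, p)) /\
         same_seg g L (l.+1, k) (l.+1, k.+1)
     | Cap k =>
         (forall p, p < k -> same_seg g L (l.+1, p) (l, p)) /\
         (forall p, k.+2 <= p < size o -> same_seg g L (l.+1, p - 2) (l, p)) /\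
         same_seg g L (l, k) (l, k.+1)
     end).

Definition shadow_coloring (ss : seq slice) (ls : seq (seq bool))
  (g : pt -> 'M[C]_2) (u : pt -> 'cV[C]_2) : Prop :=
  (forall l r, l < size ls -> r <= size (nth [::] ls l) -> u (l, r) != 0%R)
  /\
  (forall l p, l < size ls -> p < size (nth [::] ls l) ->
     let b := nth false (nth [::] ls l) p in
     u (l, down_reg b p) = g (l, p) *m u (l, up_reg b p))
  /\
  (forall l, l < size ss ->
     let o := nth [::] ls l in
     match nth (Cap 0) ss l with
     | Cross k _ =>
         forall r, r <= size o -> r != k.+1 -> u (l.+1, r) = u (l, r)
     | Cup k _ =>
         (forall r, r <= k -> u (l.+1, r) = u (l, r)) /\
         (forall r, k <= r <= size o -> u (l.+1, r.+2) = u (l, r))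
     | Cap k =>
         (forall r, r <= k -> u (l.+1, r) = u (l, r)) /\
         (forall r, k.+2 <= r <= size o -> u (l.+1, r - 2) = u (l, r))
     end).

Definition e2 : 'cV[C]_2 := delta_mx 1%R 0%R.

Definition admissible (ls : seq (seq bool))
  (L : pt -> 'rV[C]_2) (u : pt -> 'cV[C]_2) : Prop :=
  (forall l r, l < size ls -> r <= size (nth [::] ls l) ->
     \det (row_mx (u (l, r)) e2) != 0%R)
  /\
  (forall l p, l < size ls -> p < size (nth [::] ls l) ->
     let b := nth false (nth [::] ls l) p in
     forall v : 'rV[C]_2, v != 0%R -> (v <= L (l, p))%MS ->
       v *m e2 != 0%R /\ v *m u (l, up_reg b p) != 0%R).

End Colorings.

(* Main.v *)
Require Import Defs.
From HB Require Import structures.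
From mathcomp Require Import all_boot all_order all_algebra.
From mathcomp Require Import complex reals.
From mathcomp Require Import zify.
Import Order.TTheory GRing.Theory Num.Theory.
Local Open Scope ring_scope.
Set Implicit Arguments. Unset Strict Implicit.

Section Nat.
Local Open Scope nat_scope.

Lemma levelsP o ss ls : levels o ss = Some ls ->
  [/\ size ls = (size ss).+1, nth [::] ls 0 = o &
      forall l, l < size ss ->
        step (nth [::] ls l) (nth (Cap 0) ss l) = Some (nth [::] ls l.+1)].
Proof.
elim: ss o ls => [|s ss IH] o ls /=; first by move=> [<-].
case E: (step o s) => [o'|] //; case E2: (levels o' ss) => [ls'|] //= [<-].
have [H1 H2 H3] := IH _ _ E2; split => //=; first by rewrite H1.
by case => [|l] /=; [rewrite H2 | rewrite ltnS; exact: H3].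
Qed.

Lemma nth_tcd (o s : seq bool) k j p : k <= size o ->
  nth false (take k o ++ s ++ drop j o) p =
  if p < k then nth false o p else if p < k + size s then nth false s (p - k)
  else nth false o (j + (p - k - size s)).
Proof.
move=> ko; rewrite nth_cat size_takel //; case: ifP => pk; first by rewrite nth_take.
rewrite nth_cat; case: ifP => H1; case: ifP => H2 //; try lia.
by rewrite nth_drop.
Qed.

End Nat.

Section Mat.
Variable C : fieldType.
Local Open Scope nat_scope.

Definition Gx (b : bool) (A : 'M[C]_2) := if b then A else invmx A.
Definition Gm (g : pt -> 'M[C]_2) (ls : seq (seq bool)) (l p : nat) :=
  Gx (nth false (nth [::] ls l) p) (g (l, p)).
Fixpoint prodM (G : nat -> 'M[C]_2) r :=
  if r is r'.+1 then G r' *m prodM G r' else 1%:M.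
Definition uu g ls (u0 : 'cV[C]_2) (x : pt) := prodM (Gm g ls x.1) x.2 *m u0.

Lemma prodM_shift G G' a a' n : prodM G' a' = prodM G a ->
  (forall i, i < n -> G' (a' + i) = G (a + i)) -> prodM G' (a' + n) = prodM G (a + n).
Proof.
move=> E H; elim: n H => [|n IH] H; first by rewrite !addn0.
rewrite !addnS /= IH; last by move=> i iN; apply: H; rewrite ltnS ltnW.
by rewrite H.
Qed.

Lemma key g (L : pt -> 'rV[C]_2) i1 i1' i2 i2' pos :
  g i1 \in unitmx -> g i2 \in unitmx ->
  crossing_rule g L i1 i1' i2 i2' pos -> g i1' *m g i2' = g i2 *m g i1.
Proof.
move=> u1 u2; rewrite /crossing_rule; case: pos => -[E1 E2 _ _]; rewrite E1 E2.
  by rewrite !mulmxA mulmxV // mul1mx.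
by rewrite mulmxKV.
Qed.

Lemma cross_G (A B A' B' : 'M[C]_2) (a b : bool) :
  A \in unitmx -> B \in unitmx -> A' \in unitmx -> B' \in unitmx ->
  (if a then (if b then B' *m A' = B *m A else B *m B' = A *m A')
   else (if b then A' *m A = B' *m B else A *m B = A' *m B')) ->
  Gx a B' *m Gx b A' = Gx b B *m Gx a A.
Proof.
move=> uA uB uA' uB'; rewrite /Gx; case: a; case: b => E //.
- apply: (can_inj (mulKmx uB)); rewrite mulmxA E mulmxK // mulKVmx //.
- apply: (can_inj (mulKmx uB')); rewrite mulKVmx // mulmxA -E mulmxK //.
- have uAB : A *m B \in unitmx by rewrite unitmx_mul uA uB.
  apply: (can_inj (mulKmx uAB)).
  rewrite {1}E !mulmxA !mulmxK // !mulmxV //.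
Qed.

Lemma Gx_cancel (A : 'M[C]_2) b : A \in unitmx -> Gx (~~ b) A *m Gx b A = 1%:M.
Proof. by move=> uA; case: b; rewrite /Gx /= ?mulVmx ?mulmxV. Qed.

End Mat.

Section Sh.
Variable C : fieldType.
Local Open Scope nat_scope.

Lemma shadow_main o0 ss ls (g : pt -> 'M[C]_2) L (u0 : 'cV[C]_2) :
  levels o0 ss = Some ls -> dec_coloring ss ls g L -> u0 != 0%R ->
  shadow_coloring ss ls g (uu g ls u0).
Proof.
move=> /levelsP [Hs H0 Hst] [D1 D2] u0n.
have gU : forall l p, l < size ls -> p < size (nth [::] ls l) -> g (l,p) \in unitmx.
  by move=> l p lL pL; have [d _ _] := D1 l p lL pL; rewrite unitmxE d unitr1.
have GU : forall l p, l < size ls -> p < size (nth [::] ls l) -> Gm g ls l p \in unitmx.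
  by move=> l p lL pL; rewrite /Gm /Gx; case: ifP; rewrite ?unitmx_inv gU.
have MU : forall l r, l < size ls -> r <= size (nth [::] ls l) ->
    prodM (Gm g ls l) r \in unitmx.
  move=> l r lL; elim: r => [|r IH] rL /=; first exact: unitmx1.
  by rewrite unitmx_mul GU // IH // ltnW.
split; [|split].
- move=> l r lL rL; rewrite /uu /=; apply: contra u0n => /eqP E.
  by rewrite -(mulKmx (MU l r lL rL) u0) E mulmx0.
- move=> l p lL pL /=; rewrite /uu /= /up_reg /down_reg.
  case E: (nth false (nth [::] ls l) p) => /=.
  + by rewrite /Gm /Gx E mulmxA.
  + by rewrite /Gm /Gx E !mulmxA mulmxV ?gU // mul1mx.
move=> l lS /=.
have lL : l < size ls by rewrite Hs ltnS ltnW.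
have l1L : l.+1 < size ls by rewrite Hs ltnS.
have St := Hst l lS; have Dl := D2 l lS; move: St Dl; rewrite /uu /=.
have GmE : forall l' p, Gm g ls l' p = Gx (nth false (nth [::] ls l') p) (g (l', p)) by [].
set o := nth [::] ls l.
case: (nth (Cap 0) ss l) => [k ov|k b|k] /=.
-
  case: ifP => // kS [Eo0] [Dsame Dcr].
  have Eo' : take k o ++ [:: nth false o k.+1; nth false o k] ++ drop k.+2 o = nth [::] ls l.+1 by [].
  have so' : size (nth [::] ls l.+1) = size o.
    by rewrite -Eo' !size_cat /= size_drop size_takel; lia.
  have gUl1 : forall p, p < size o -> g (l.+1, p) \in unitmx.
    by move=> p pL; apply: gU => //; rewrite so'.
  have pre : forall r, r <= k -> prodM (Gm g ls l.+1) r = prodM (Gm g ls l) r.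
    move=> r rk; have := @prodM_shift _ (Gm g ls l) (Gm g ls l.+1) 0 0 r erefl.
    rewrite !add0n; apply=> i ir; rewrite !GmE -Eo' nth_tcd; last by lia.
    rewrite ifT; last by lia.
    by have [-> _] := Dsame i ltac:(lia) ltac:(lia) ltac:(lia).
  have base : prodM (Gm g ls l.+1) k.+2 = prodM (Gm g ls l) k.+2.
    rewrite /= pre // !mulmxA; congr (_ *m _).
    rewrite !GmE -Eo' !nth_tcd; try lia. rewrite /=.
    rewrite ifF; last by lia. rewrite ifT; last by lia.
    rewrite ifF; last by lia. rewrite ifT; last by lia.
    have -> : k.+1 - k = 1 by lia.
    rewrite subnn /=.
    have uA : g (l,k) \in unitmx := gU l k lL (ltnW kS).
    have uB : g (l,k.+1) \in unitmx := gU _ _ lL kS.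
    have uA' := gUl1 k (ltnW kS). have uB' := gUl1 k.+1 kS.
    move: Dcr; rewrite /cross_data.
    case Ea: (nth false o k); case Eb: (nth false o k.+1) => Dcr;
      apply: (cross_G uA uB uA' uB') => /=.
    + exact: (key uA uB Dcr).
    + exact: (key uA' uA Dcr).
    + exact: (key uB uB' Dcr).
    + exact: (key uB' uA' Dcr).
  move=> r rL rk; case: (leqP r k) => rk'; first by rewrite pre.
  have -> : r = k.+2 + (r - k.+2) by lia.
  rewrite (prodM_shift base) // => i ir.
  rewrite !GmE -Eo' nth_tcd; last by lia.
  rewrite /= ifF; last by lia. rewrite ifF; last by lia.
  have -> : k.+2 + (k.+2 + i - k - 2) = k.+2 + i by lia.
  by have [-> _] := Dsame (k.+2 + i) ltac:(lia) ltac:(lia) ltac:(lia).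
-
  case: ifP => // kS [Eo0] [Dp [Dq Dk]].
  have Eo' : take k o ++ [:: b; ~~ b] ++ drop k o = nth [::] ls l.+1 by [].
  have so' : size (nth [::] ls l.+1) = (size o).+2.
    by rewrite -Eo' !size_cat /= size_drop size_takel; lia.
  have pre : forall r, r <= k -> prodM (Gm g ls l.+1) r = prodM (Gm g ls l) r.
    move=> r rk; have := @prodM_shift _ (Gm g ls l) (Gm g ls l.+1) 0 0 r erefl.
    rewrite !add0n; apply=> i ir; rewrite !GmE -Eo' nth_tcd //.
    rewrite ifT; last by lia.
    by have [-> _] := Dp i ltac:(lia).
  have base : prodM (Gm g ls l.+1) k.+2 = prodM (Gm g ls l) k.
    rewrite /= pre // mulmxA !GmE -Eo' !nth_tcd // /=.
    rewrite ifF; last by lia. rewrite ifT; last by lia.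
    rewrite ifF; last by lia. rewrite ifT; last by lia.
    have -> : k.+1 - k = 1 by lia.
    rewrite subnn /= (proj1 Dk) Gx_cancel ?mul1mx //.
    by apply: gU => //; rewrite so'; lia.
  split=> r rr /=; first by rewrite pre.
  have -> : Gm g ls l.+1 r.+1 *m (Gm g ls l.+1 r *m prodM (Gm g ls l.+1) r) =
     prodM (Gm g ls l.+1) (k.+2 + (r - k)).
    by have -> : k.+2 + (r - k) = r.+2 by lia.
  have -> : prodM (Gm g ls l) r = prodM (Gm g ls l) (k + (r - k)).
    by congr prodM; lia.
  rewrite (prodM_shift base) // => i ir.
  rewrite !GmE -Eo' nth_tcd // /=.
  rewrite ifF; last by lia. rewrite ifF; last by lia.
  have -> : k + (k.+2 + i - k - 2) = k + i by lia.
  have -> : k.+2 + i = (k + i).+2 by lia.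
  by have [-> _] := Dq (k + i) ltac:(lia).
-
  case: ifP => // /andP [kS kne] [Eo0] [Dp [Dq Dk]].
  have Eo' : take k o ++ [::] ++ drop k.+2 o = nth [::] ls l.+1 by [].
  have pre : forall r, r <= k -> prodM (Gm g ls l.+1) r = prodM (Gm g ls l) r.
    move=> r rk; have := @prodM_shift _ (Gm g ls l) (Gm g ls l.+1) 0 0 r erefl.
    rewrite !add0n; apply=> i ir; rewrite !GmE -Eo' nth_tcd; last by lia.
    rewrite ifT; last by lia.
    by have [-> _] := Dp i ltac:(lia).
  have ob : nth false o k.+1 = ~~ nth false o k.
    by move: kne; case: (nth false o k); case: (nth false o k.+1).
  have base : prodM (Gm g ls l.+1) k = prodM (Gm g ls l) k.+2.
    rewrite /= mulmxA !GmE -/o ob -(proj1 Dk) Gx_cancel ?mul1mx ?pre //.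
    exact: gU lL (ltnW kS).
  split=> r rr /=; first by rewrite pre.
  have -> : r - 2 = k + (r - k.+2) by lia.
  have -> : prodM (Gm g ls l) r = prodM (Gm g ls l) (k.+2 + (r - k.+2)).
    by congr prodM; lia.
  rewrite (prodM_shift base) // => i ir.
  rewrite !GmE -Eo' nth_tcd /=; last by lia.
  rewrite ifF; last by lia. rewrite ifF; last by lia.
  have -> : k.+2 + (k + i - k - 0) = k.+2 + i by lia.
  have E2 : k + i = k.+2 + i - 2 by lia.
  by rewrite E2; have [-> _] := Dq (k.+2 + i) ltac:(lia).
Qed.
End Sh.

Section Gen.
Variable C : fieldType.
Lemma det22 (A : 'M[C]_2) : \det A = A 0 0 * A 1 1 - A 0 1 * A 1 0.
Proof.
rewrite (expand_det_col _ 0) !big_ord_recl big_ord0 /cofactor !det_mx11 !mxE /=.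
rewrite addr0 /bump /= !expr0 !mul1r expr1.
have -> : (lift ord0 (0 : 'I_1) : 'I_2) = 1 by apply/val_inj.
rewrite mulN1r mulrN.
have -> : (lift (1 : 'I_2) (0 : 'I_1) : 'I_2) = 0 by apply/val_inj.
by rewrite [A 1 0 * _]mulrC. Qed.

Lemma mulmx2E m n (A : 'M[C]_(m,2)) (B : 'M[C]_(2,n)) i j :
  (A *m B) i j = A i 0 * B 0 j + A i 1 * B 1 j.
Proof.
rewrite !mxE !big_ord_recl big_ord0 addr0.
by have -> : (lift ord0 (ord0 : 'I_1) : 'I_2) = 1 by apply/val_inj.
Qed.

Lemma I2P (j : 'I_2) : j = 0 \/ j = 1.
Proof. by case: j => [[|[|]]] // ?; [left|right]; apply/val_inj. Qed.

Lemma nz11 (X : 'M[C]_1) : X 0 0 != 0 -> X != 0.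
Proof. by apply: contraNneq => ->; rewrite mxE. Qed.

Lemma rv_nz (w : 'rV[C]_2) : w != 0 -> (w 0 0, w 0 1) != (0, 0).
Proof.
apply: contraNneq => -[a b]; apply/eqP/matrixP => i j; rewrite (ord1 i) mxE; by case: (I2P j) => ->.
Qed.

Lemma cv_nz (w : 'cV[C]_2) : w != 0 -> (w 0 0, - w 1 0) != (0, 0).
Proof.
apply: contraNneq => -[a /eqP]; rewrite oppr_eq0 => /eqP b; apply/eqP/matrixP => i j; rewrite (ord1 j) mxE; by case: (I2P i) => ->.
Qed.

Variable s : C.
Definition hm : 'M[C]_2 := \matrix_(i < 2, j < 2)
   (if i == j then 1 else if (i == 0) && (j == 1) then s else 0).
Lemma hmE : [/\ hm 0 0 = 1, hm 0 1 = s, hm 1 0 = 0 & hm 1 1 = 1].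
Proof. by rewrite !mxE. Qed.
Lemma e2E : [/\ e2 C 0 0 = 0 & e2 C 1 0 = 1].
Proof. by rewrite !mxE. Qed.
Lemma rowmxE (x : 'cV[C]_2) : \det (row_mx x (e2 C)) = x 0 0.
Proof.
have s0 : @split 1 1 0 = inl 0.
  have -> : (0 : 'I_(1+1)) = unsplit (inl (0 : 'I_1)) by apply/val_inj.
  exact: unsplitK.
have s1 : @split 1 1 1 = inr 0.
  have -> : (1 : 'I_(1+1)) = unsplit (inr (0 : 'I_1)) by apply/val_inj.
  exact: unsplitK.
rewrite det22 !mxE s0 s1 !mxE /=; by rewrite mulr1 mul0r subr0.
Qed.
End Gen.

Section NumS.
Variable C : numFieldType.

Lemma pick_notin (s : seq C) : exists t, t \notin s.
Proof.
pose s1 := [seq (n%:R : C) | n <- iota 0 (size s).+1].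
have U : uniq s1.
  by rewrite map_inj_uniq ?iota_uniq // => m n /eqP; rewrite eqr_nat => /eqP.
have /hasP [x _ xn] : has (fun x => x \notin s) s1.
  apply/negPn/negP => /hasPn H.
  have := uniq_leq_size U (fun x hx => negbNE (H x hx)).
  by rewrite size_map size_iota ltnn.
by exists x.
Qed.

Lemma avoid (ps : seq (C * C)) : (forall x, x \in ps -> x != (0, 0)) ->
  exists t, forall x, x \in ps -> x.1 + x.2 * t != 0.
Proof.
move=> H; have [t tn] := pick_notin [seq - x.1 / x.2 | x <- ps].
exists t => x xin; case: (eqVneq x.2 0) => [z|nz].
  rewrite z mul0r addr0; move: (H x xin); apply: contra => x1.
  by case: x {xin} z x1 => a b /= -> /eqP ->.
apply: contra tn => /eqP E; apply/mapP; exists x => //.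
move/eqP: E; rewrite addr_eq0 => /eqP ->.
by rewrite opprK mulrC mulKf.
Qed.

Lemma hmM (s : C) : hm s *m hm (- s) = 1%:M.
Proof.
apply/matrixP => i j; rewrite mulmx2E !mxE.
by case: (I2P i) => ->; case: (I2P j) => -> /=; rewrite ?mul1r ?mulr1 ?mul0r ?mulr0 ?addr0 ?add0r ?subrr ?addNr.
Qed.

Lemma hm_det (s : C) : \det (hm s) = 1.
Proof. by rewrite det22 !mxE /= mulr1 mulr0 subr0. Qed.

End NumS.
Unset Implicit Arguments. Set Strict Implicit.
Local Open Scope complex_scope.

Theorem theoremB (R : realType) (o0 : seq bool) (ss : seq slice)
  (ls : seq (seq bool)) (g : pt -> 'M[R[i]]_2) (L : pt -> 'rV[R[i]]_2) :
  levels o0 ss = Some ls ->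
  dec_coloring ss ls g L ->
  exists h : 'M[R[i]]_2, \det h = 1 /\
    exists u : pt -> 'cV[R[i]]_2,
      shadow_coloring ss ls (fun x => invmx h *m g x *m h) u /\
      admissible ls (fun x => L x *m h) u.
Proof.
move=> Hl Hd.
have [Hs H0 Hst] := levelsP Hl; have [D1 D2] := Hd.
have gU : forall l p, (l < size ls)%N -> (p < size (nth [::] ls l))%N -> g (l,p) \in unitmx.
  by move=> l p lL pL; have [d _ _] := D1 l p lL pL; rewrite unitmxE d unitr1.
have GU : forall l p, (l < size ls)%N -> (p < size (nth [::] ls l))%N -> Gm g ls l p \in unitmx.
  by move=> l p lL pL; rewrite /Gm /Gx; case: ifP; rewrite ?unitmx_inv gU.
have MU : forall l r, (l < size ls)%N -> (r <= size (nth [::] ls l))%N ->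
    prodM (Gm g ls l) r \in unitmx.
  move=> l r lL; elim: r => [|r IH] rL /=; first exact: unitmx1.
  by rewrite unitmx_mul GU // IH // ltnW.
pose F l p := L (l,p) *m prodM (Gm g ls l) (up_reg (nth false (nth [::] ls l) p) p).
have Fnz : forall l p, (l < size ls)%N -> (p < size (nth [::] ls l))%N -> F l p != 0.
  move=> l p lL pL; have [_ Ln _] := D1 l p lL pL; apply: contra Ln => /eqP E.
  have uM : prodM (Gm g ls l) (up_reg (nth false (nth [::] ls l) p) p) \in unitmx.
    by apply: MU => //; rewrite /up_reg; case: ifP => _; lia.
  by rewrite -(mulmxK uM (L (l,p))) -/(F l p) E mul0mx.
pose ps1 := [seq ((F l p) 0 0, (F l p) 0 1) | l <- iota 0 (size ls), p <- iota 0 (size (nth [::] ls l))].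
have [t Ht] : exists t, forall x, x \in ps1 -> x.1 + x.2 * t != 0.
  apply: avoid => x /allpairsPdep [l [p [lin pin ->]]].
  rewrite mem_iota in lin; rewrite mem_iota in pin.
  by apply: rv_nz; apply: Fnz; lia.
pose u0 : 'cV[R[i]]_2 := \col_(j < 2) (if j == 0 then 1 else t).
have u0nz : u0 != 0.
  by apply/negP => /eqP /matrixP /(_ 0 0); rewrite !mxE /= => /eqP; rewrite oner_eq0.
have Sh := shadow_main Hl Hd u0nz.
pose u := uu g ls u0.
pose ps2 := [seq ((u (l,r)) 0 0, - (u (l,r)) 1 0) | l <- iota 0 (size ls), r <- iota 0 (size (nth [::] ls l)).+1].
pose ps3 := [seq ((L (l,p)) 0 1, (L (l,p)) 0 0) | l <- iota 0 (size ls), p <- iota 0 (size (nth [::] ls l))].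
have [S1 [S2 S3]] := Sh.
have [s Hs'] : exists s, forall x, x \in ps2 ++ ps3 -> x.1 + x.2 * s != 0.
  apply: avoid => x; rewrite mem_cat => /orP [] /allpairsPdep [l [p [lin pin ->]]];
  rewrite mem_iota in lin; rewrite mem_iota in pin.
    by apply: cv_nz; apply: S1; lia.
  have [_ Ln _] := D1 l p ltac:(lia) ltac:(lia).
  by move: (rv_nz Ln); rewrite !xpair_eqE andbC.
pose h := hm s.
have hU : h \in unitmx by rewrite unitmxE hm_det unitr1.
have Ehi : invmx h = hm (- s) by rewrite -[hm (- s)](mulKmx hU) hmM mulmx1.
exists h; split; first exact: hm_det.
exists (fun x => invmx h *m u x); split.
- split; [|split].
  + move=> l r lL rL; apply: contra (S1 l r lL rL) => /eqP E.
    by rewrite -(mulKVmx hU (uu g ls u0 (l, r))) E mulmx0.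
  + move=> l p lL pL /=; rewrite /u S2 //.
    by rewrite !mulmxA mulmxK.
  + move=> l lS; have := S3 l lS; case: (nth (Cap 0) ss l) => [k ov|k b|k] /=.
    * by move=> H r r1 r2; rewrite /u H.
    * by move=> [H1 H2]; split=> r rr; [rewrite /u H1 | rewrite /u H2].
    * by move=> [H1 H2]; split=> r rr; [rewrite /u H1 | rewrite /u H2].
- split.
  + move=> l r lL rL; rewrite rowmxE Ehi mulmx2E.
    have [e00 e01 _ _] := hmE (- s); rewrite e00 e01 mul1r -/u.
    have -> : - s * (u (l,r)) 1 0 = - (u (l,r)) 1 0 * s by rewrite mulNr mulNr mulrC.
    have M : ((u (l,r)) 0 0, - (u (l,r)) 1 0) \in ps2 ++ ps3.
      rewrite mem_cat; apply/orP; left; apply/allpairsPdep; exists l, r.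
      by rewrite !mem_iota; split => //; lia.
    exact: Hs' _ M.
  + move=> l p lL pL /= v vnz /sub_rVP [a Ev].
    have anz : a != 0 by apply: contraNneq vnz => a0; rewrite Ev a0 scale0r.
    rewrite Ev -!scalemxAl; split; apply: nz11; rewrite mxE mulf_neq0 //.
    * rewrite mulmx2E mulmx2E mulmx2E.
      have [e00 e01 e10 e11] := hmE s; have [f0 f1] := e2E (R[i]).
      rewrite e00 e01 e10 e11 f0 f1 !mulr0 !mulr1 add0r.
      have M : ((L (l,p)) 0 1, (L (l,p)) 0 0) \in ps2 ++ ps3.
        rewrite mem_cat; apply/orP; right; apply/allpairsPdep; exists l, p.
        by rewrite !mem_iota; split => //; lia.
      by rewrite addrC; exact: Hs' _ M.
    * rewrite -mulmxA (mulmxA h) mulmxV // mul1mx /u /uu /=.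
      have -> : L (l,p) *m (prodM (Gm g ls l) (up_reg (nth false (nth [::] ls l) p) p) *m u0)
        = F l p *m u0 by rewrite mulmxA.
      rewrite mulmx2E.
      have -> : u0 0 0 = 1 by rewrite mxE.
      have -> : u0 1 0 = t by rewrite mxE.
      rewrite mulr1.
      have M : ((F l p) 0 0, (F l p) 0 1) \in ps1.
        apply/allpairsPdep; exists l, p.
        by rewrite !mem_iota; split => //; lia.
      exact: Ht _ M.
Qed.
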